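(* Let $\mathbb A$ be a graph of groups and let $\mathcal B$ be a folded $\mathbb A$-graph with associated graph of groups $\mathbb B$. If $p$ is a reduced $\mathbb B$-path, then the $\mathbb A$-path $\mu(p)$ is $\mathbb A$-reduced.
   Context: Graphs are in Serre's sense. A graph of groups $\mathbb A$ has vertex groups $A_v$, edge groups $A_e=A_{e^{-1}}$, monomorphisms $\alpha_e:A_e\to A_{o(e)}$, $\omega_e:A_e\to A_{t(e)}$ with $\alpha_{e^{-1}}=\omega_e$. An $\mathbb A$-path is a sequence $a_0,e_1,a_1,\dots,e_k,a_k$ with $e_1,\dots,e_k$ an edge path and $a_0\in A_{o(e_1)}$, $a_i\in A_{t(e_i)}$; it is $\mathbb A$-reduced if it contains no subsequence $e,\omega_e(c),e^{-1}$ with $c\in A_e$. An $\mathbb A$-graph $\mathcal B$ is a graph $B$ with a graph morphism $[\cdot]:B\to A$, subgroups $B_u\le A_{[u]}$ ($u\in VB$) and elements $f_\alpha\in A_{[o(f)]}$, $f_\omega\in A_{[t(f)]}$ ($f\in EB$) with $(f^{-1})_\alpha=(f_\omega)^{-1}$. Its graph of groups $\mathbb B$ has graph $B$, vertex groups $B_u$, edge groups $B_f=\alpha_{[f]}^{-1}(f_\alpha^{-1}B_{o(f)}f_\alpha)\cap\omega_{[f]}^{-1}(f_\omega B_{t(f)}f_\omega^{-1})$ and $\alpha_f(g)=f_\alpha\alpha_{[f]}(g)f_\alpha^{-1}$ (so $\omega_f(g)=f_\omega^{-1}\omega_{[f]}(g)f_\omega$). A $\mathbb B$-path $b_0,f_1,b_1,\dots,f_s,b_s$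 is defined analogously with $b_i$ in the groups $B_u$, and is reduced if it contains no subsequence $f,\omega_f(c),f^{-1}$ with $c\in B_f$. For such a path, $\mu(p)=(b_0(f_1)_\alpha),[f_1],((f_1)_\omega b_1(f_2)_\alpha),\dots,[f_s],((f_s)_\omega b_s)$. $\mathcal B$ is folded if neither of the following holds: (1) there are distinct edges $f_1,f_2$ with $o(f_1)=o(f_2)=z$, $[f_1]=[f_2]=e$, and $(f_2)_\alpha=a'(f_1)_\alpha\alpha_e(c)$ for some $c\in A_e$, $a'\in B_z$; (2) there is an edge $f$ with $[f]=e$ such that $\alpha_e^{-1}(f_\alpha^{-1}B_{o(f)}f_\alpha)\neq\omega_e^{-1}(f_\omega B_{t(f)}f_\omega^{-1})$. *)

(* Defs.v *)
From Stdlib Require Import List.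
Import ListNotations.
Set Implicit Arguments.
Unset Strict Implicit.

(* Groups.  All groups of a graph of groups are represented with      *)
(* elements drawn from one common (arbitrary) type T: a group is a    *)
(* subset [gmem] of T together with its own operations, satisfying    *)
(* the group axioms on that subset.  Every family of groups can be    *)
(* represented this way (take T = disjoint union of the carriers).    *)
Record pgroup (T : Type) := PGroup {
  gmem : T -> Prop;
  gmul : T -> T -> T;
  gone : T;
  ginv : T -> T;
  gmem_one : gmem gone;
  gmem_mul : forall x y, gmem x -> gmem y -> gmem (gmul x y);
  gmem_inv : forall x, gmem x -> gmem (ginv x);
  gmulA : forall x y z, gmem x -> gmem y -> gmem z ->
            gmul x (gmul y z) = gmul (gmul x y) z;
  gmul1l : forall x, gmem x -> gmul gone x = x;
  gmul1r : forall x, gmem x -> gmul x gone = x;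
  gmulVl : forall x, gmem x -> gmul (ginv x) x = gone;
  gmulVr : forall x, gmem x -> gmul x (ginv x) = gone
}.

Definition is_subgroup (T : Type) (G : pgroup T) (H : T -> Prop) : Prop :=
  (forall x, H x -> gmem G x) /\ H (gone G) /\
  (forall x y, H x -> H y -> H (gmul G x y)) /\
  (forall x, H x -> H (ginv G x)).

Definition is_mono (T : Type) (G H : pgroup T) (f : T -> T) : Prop :=
  (forall x, gmem G x -> gmem H (f x)) /\
  (forall x y, gmem G x -> gmem G y -> f (gmul G x y) = gmul H (f x) (f y)) /\
  (forall x y, gmem G x -> gmem G y -> f x = f y -> x = y).

Record sgraph := SGraph {
  vert : Type;
  edge : Type;
  einv : edge -> edge;
  eorig : edge -> vert;
  einvK : forall e, einv (einv e) = e;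
  einv_neq : forall e, einv e <> e
}.

Definition eterm (G : sgraph) (e : edge G) : vert G := eorig (einv e).

(* Graphs of groups.  Data: vertex groups A_v, edge groups A_e with    *)
(* A_{e^-1} = A_e, monomorphisms alpha_e : A_e -> A_{o(e)}.  The map  *)
(* omega_e : A_e -> A_{t(e)} is *defined* as alpha_{e^-1}, which is   *)
(* exactly the requirement alpha_{e^-1} = omega_e.                    *)
Record graph_of_groups (T : Type) := GoG {
  ggraph : sgraph;
  vgrp : vert ggraph -> pgroup T;
  egrp : edge ggraph -> pgroup T;
  alpha : edge ggraph -> T -> T;
  egrp_inv : forall e, egrp (einv e) = egrp e;
  alpha_mono : forall e, is_mono (egrp e) (vgrp (eorig e)) (alpha e)
}.

Arguments vgrp {T} g _ : rename.
Arguments egrp {T} g _ : rename.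
Arguments alpha {T} g _ _ : rename.

Definition omega (T : Type) (A : graph_of_groups T) (e : edge (ggraph A)) : T -> T :=
  alpha A (einv e).
Arguments omega {T} A _ _.

(* A path a_0, e_1, a_1, ..., e_k, a_k is encoded by its starting     *)
(* vertex v, the element a_0 and the list [(e_1,a_1);...;(e_k,a_k)].  *)
Section GenericPaths.
Variables (V E T : Type) (inv : E -> E) (o : E -> V)
          (vmem : V -> T -> Prop) (emem : E -> T -> Prop) (om : E -> T -> T).

Fixpoint path_from (v : V) (s : list (E * T)) : Prop :=
  match s with
  | [] => True
  | (e, a) :: s' => o e = v /\ vmem (o (inv e)) a /\ path_from (o (inv e)) s'
  end.

Definition is_path (v : V) (a0 : T) (s : list (E * T)) : Prop :=
  vmem v a0 /\ path_from v s.

Fixpoint has_backtrack (s : list (E * T)) : Prop :=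
  match s with
  | (e, a) :: ((e', _) :: _) as s' =>
      (e' = inv e /\ exists c, emem e c /\ a = om e c) \/ has_backtrack s'
  | _ => False
  end.

Definition is_reduced_path (v : V) (a0 : T) (s : list (E * T)) : Prop :=
  is_path v a0 s /\ ~ has_backtrack s.
End GenericPaths.

Definition A_reduced (T : Type) (A : graph_of_groups T)
  (v : vert (ggraph A)) (a0 : T) (s : list (edge (ggraph A) * T)) : Prop :=
  is_reduced_path (@einv (ggraph A)) (@eorig (ggraph A))
    (fun v x => gmem (vgrp A v) x) (fun e x => gmem (egrp A e) x) (omega A) v a0 s.

(* A-graphs.  Data: a graph B, a graph morphism [.] : B -> A,          *)
(* subgroups B_u <= A_[u], elements f_alpha in A_[o(f)].  The element  *)
(* f_omega in A_[t(f)] is *defined* as ((f^-1)_alpha)^-1, which is    *)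
(* exactly the requirement (f^-1)_alpha = (f_omega)^-1.               *)
Record Agraph (T : Type) (A : graph_of_groups T) := AGraph {
  bgraph : sgraph;
  labv : vert bgraph -> vert (ggraph A);
  labe : edge bgraph -> edge (ggraph A);
  lab_orig : forall f, labv (eorig f) = eorig (labe f);
  lab_inv : forall f, labe (einv f) = einv (labe f);
  bvgrp : vert bgraph -> T -> Prop;
  bvgrp_sub : forall u, is_subgroup (vgrp A (labv u)) (bvgrp u);
  falpha : edge bgraph -> T;
  falpha_mem : forall f, gmem (vgrp A (labv (eorig f))) (falpha f)
}.

Arguments bgraph {T A} B : rename.
Arguments labv {T A} B _ : rename.
Arguments labe {T A} B _ : rename.
Arguments bvgrp {T A} B _ _ : rename.
Arguments falpha {T A} B _ : rename.

Section AgraphDefs.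
Variables (T : Type) (A : graph_of_groups T) (B : Agraph A).

Notation VB := (vert (bgraph B)).
Notation EB := (edge (bgraph B)).

Definition Agrp (u : VB) : pgroup T := vgrp A (labv B u).

Definition fomega (f : EB) : T :=
  ginv (Agrp (eterm f)) (falpha B (einv f)).

Definition in_conj_alpha (f : EB) (x : T) : Prop :=
  exists b, bvgrp B (eorig f) b /\
    x = gmul (Agrp (eorig f)) (ginv (Agrp (eorig f)) (falpha B f))
          (gmul (Agrp (eorig f)) b (falpha B f)).

Definition in_conj_omega (f : EB) (x : T) : Prop :=
  exists b, bvgrp B (eterm f) b /\
    x = gmul (Agrp (eterm f)) (fomega f)
          (gmul (Agrp (eterm f)) b (ginv (Agrp (eterm f)) (fomega f))).

(* edge group B_f of the graph of groups associated with B *)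
Definition begrp (f : EB) (c : T) : Prop :=
  gmem (egrp A (labe B f)) c /\
  in_conj_alpha f (alpha A (labe B f) c) /\
  in_conj_omega f (omega A (labe B f) c).

Definition bomega (f : EB) (g : T) : T :=
  gmul (Agrp (eterm f)) (ginv (Agrp (eterm f)) (fomega f))
    (gmul (Agrp (eterm f)) (omega A (labe B f) g) (fomega f)).

Definition B_reduced (u : VB) (b0 : T) (s : list (EB * T)) : Prop :=
  is_reduced_path (@einv (bgraph B)) (@eorig (bgraph B))
    (bvgrp B) begrp bomega u b0 s.

Definition fold_cond1 : Prop :=
  exists f1 f2 : EB, f1 <> f2 /\ eorig f1 = eorig f2 /\ labe B f1 = labe B f2 /\
    exists c a', gmem (egrp A (labe B f1)) c /\ bvgrp B (eorig f1) a' /\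
      falpha B f2 = gmul (Agrp (eorig f1)) a'
                      (gmul (Agrp (eorig f1)) (falpha B f1) (alpha A (labe B f1) c)).

Definition fold_cond2 : Prop :=
  exists f : EB,
    ~ (forall c,
         (gmem (egrp A (labe B f)) c /\ in_conj_alpha f (alpha A (labe B f) c)) <->
         (gmem (egrp A (labe B f)) c /\ in_conj_omega f (omega A (labe B f) c))).

Definition folded : Prop := ~ fold_cond1 /\ ~ fold_cond2.

Fixpoint mu_rest (s : list (EB * T)) : list (edge (ggraph A) * T) :=
  match s with
  | [] => []
  | (f, b) :: s' =>
      (labe B f,
       match s' with
       | [] => gmul (Agrp (eterm f)) (fomega f) b
       | (f', _) :: _ =>
           gmul (Agrp (eterm f)) (fomega f) (gmul (Agrp (eterm f)) b (falpha B f'))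
       end) :: mu_rest s'
  end.

Definition mu_head (u : VB) (b0 : T) (s : list (EB * T)) : T :=
  match s with
  | [] => b0
  | (f1, _) :: _ => gmul (Agrp u) b0 (falpha B f1)
  end.

End AgraphDefs.

Arguments folded {T A} B.
Arguments B_reduced {T A} B _ _ _.
Arguments mu_head {T A} B _ _ _.
Arguments mu_rest {T A} B _.
Arguments A_reduced {T} A _ _ _.

(* Main.v *)
Require Import Defs.
From Stdlib Require Import List Classical.
Import ListNotations.

Section G.
Variables (T : Type) (G : pgroup T).
Lemma gcl x y : gmem G x -> gmem G y -> gmul G (ginv G x) (gmul G x y) = y.
Proof. intros. rewrite gmulA by auto using gmem_inv. rewrite gmulVl, gmul1l; auto. Qed.
Lemma gcl' x y : gmem G x -> gmem G y -> gmul G x (gmul G (ginv G x) y) = y.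
Proof. intros. rewrite gmulA by auto using gmem_inv. rewrite gmulVr, gmul1l; auto. Qed.
Lemma ginvK x : gmem G x -> ginv G (ginv G x) = x.
Proof.
  intros. transitivity (gmul G (ginv G (ginv G x)) (gmul G (ginv G x) x)).
  - rewrite gmulVl, gmul1r; auto using gmem_inv.
  - apply gcl; auto using gmem_inv.
Qed.
End G.

Section Main.
Variables (T : Type) (A : graph_of_groups T) (B : Agraph A).

Lemma lab_term (f : edge (bgraph B)) :
  labv B (eterm f) = eorig (einv (labe B f)).
Proof. unfold eterm. rewrite lab_orig, lab_inv. reflexivity. Qed.

Lemma key (f g : edge (bgraph B)) b c :
  folded B -> bvgrp B (eterm f) b -> eorig g = eterm f ->
  labe B g = einv (labe B f) -> gmem (egrp A (labe B f)) c ->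
  gmul (Agrp (eterm f)) (fomega f) (gmul (Agrp (eterm f)) b (falpha B g))
    = omega A (labe B f) c ->
  g = einv f /\ begrp f c /\ b = bomega f c.
Proof.
  intros [NF1 NF2] Hb Hog Hl Hc E.
  set (Gr := Agrp (eterm f)) in *.
  assert (Hh : gmem Gr (falpha B (einv f))) by apply (falpha_mem (einv f)).
  assert (Hg : gmem Gr (falpha B g)).
  { unfold Gr, Agrp. rewrite <- Hog. apply falpha_mem. }
  assert (HbG : gmem Gr b).
  { destruct (bvgrp_sub (eterm f)) as [H _]. apply H; auto. }
  assert (Hw : gmem Gr (omega A (labe B f) c)).
  { unfold Gr, Agrp. rewrite lab_term. unfold omega.
    destruct (alpha_mono (einv (labe B f))) as [H _]. apply H.
    rewrite egrp_inv. auto. }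
  unfold fomega in E. fold Gr in E.
  set (h := falpha B (einv f)) in *.
  set (w := omega A (labe B f) c) in *.
  destruct (classic (g = einv f)) as [Heq | Hne].
  - subst g. fold h in E, Hg.
    assert (Hinvh : ginv Gr (ginv Gr h) = h) by (apply ginvK; auto).
    split; [reflexivity|]. split.
    + split; [auto|]. split.
      * assert (Hall : forall c, (gmem (egrp A (labe B f)) c /\ in_conj_alpha f (alpha A (labe B f) c)) <->
           (gmem (egrp A (labe B f)) c /\ in_conj_omega f (omega A (labe B f) c))).
        { apply NNPP. intro N. apply NF2. exists f. exact N. }
        apply (proj2 (Hall c)). split; [auto|].
        exists b. split; auto. unfold fomega. fold Gr h. rewrite Hinvh. fold w. auto.
      * exists b. split; auto. unfold fomega. fold Gr h. rewrite Hinvh. fold w. auto.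
    + unfold bomega, fomega. fold Gr h w. rewrite Hinvh. rewrite <- E.
      rewrite <- gmulA by auto using gmem_inv, gmem_mul.
      rewrite gcl' by auto using gmem_inv, gmem_mul.
      rewrite <- gmulA by auto using gmem_inv, gmem_mul.
      rewrite gmulVr, gmul1r; auto.
  - exfalso. apply NF1. exists (einv f), g. split; [intro HH; apply Hne; symmetry; exact HH|].
    split; [symmetry; exact Hog|]. split; [rewrite lab_inv; auto|].
    exists c, (ginv Gr b). split; [rewrite lab_inv, egrp_inv; auto|].
    split.
    + destruct (bvgrp_sub (eterm f)) as [_ [_ [_ H]]]. apply H; auto.
    + change (Agrp (eorig (einv f))) with Gr. rewrite lab_inv.
      change (alpha A (einv (labe B f)) c) with w. fold h.
      rewrite <- E. rewrite gcl' by auto using gmem_mul.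
      rewrite gcl; auto.
Qed.

Lemma path_mu (s : list (edge (bgraph B) * T)) (u : vert (bgraph B)) :
  path_from (@einv (bgraph B)) (@eorig (bgraph B)) (bvgrp B) u s ->
  path_from (@einv (ggraph A)) (@eorig (ggraph A)) (fun v x => gmem (vgrp A v) x)
    (labv B u) (mu_rest B s).
Proof.
  revert u. induction s as [|[f b] s IH]; intros u H; simpl; auto.
  destruct H as [Ho [Hb Hp]].
  split; [rewrite <- lab_orig, Ho; auto|].
  split.
  - change (gmem (vgrp A (eorig (einv (labe B f)))) ?x) with (gmem (vgrp A (eorig (einv (labe B f)))) x).
    rewrite <- lab_term.
    assert (Hh : gmem (Agrp (eterm f)) (fomega f)).
    { unfold fomega. apply gmem_inv. apply (falpha_mem (einv f)). }
    assert (HbG : gmem (Agrp (eterm f)) b).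
    { destruct (bvgrp_sub (eterm f)) as [H _]. apply H; auto. }
    destruct s as [|[f' b'] s'].
    + apply gmem_mul; auto.
    + apply gmem_mul; auto. apply gmem_mul; auto.
      destruct Hp as [Ho' _]. unfold Agrp. fold (eterm f) in Ho'. rewrite <- Ho'. apply falpha_mem.
  - rewrite <- lab_term. apply IH. exact Hp.
Qed.

Lemma nobt_mu (s : list (edge (bgraph B) * T)) (u : vert (bgraph B)) :
  folded B ->
  path_from (@einv (bgraph B)) (@eorig (bgraph B)) (bvgrp B) u s ->
  ~ has_backtrack (@einv (bgraph B)) (@begrp _ _ B) (@bomega _ _ B) s ->
  ~ has_backtrack (@einv (ggraph A)) (fun e x => gmem (egrp A e) x) (omega A) (mu_rest B s).
Proof.
  intro Hf. revert u. induction s as [|[f b] s IH]; intros u Hp Hn; simpl; auto.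
  destruct s as [|[g b'] s'].
  - simpl. auto.
  - destruct Hp as [Ho [Hb Hp]].
    cbn [mu_rest has_backtrack]. intros [[Hl [c [Hc E]]] | R].
    + destruct (key f g b c Hf Hb (proj1 Hp) Hl Hc E) as [Hg [Hbe Hbo]].
      apply Hn. simpl. left. split; [auto|]. exists c. auto.
    + apply (IH _ Hp). intro R'. apply Hn. simpl. right. exact R'.
      exact R.
Qed.
End Main.

Theorem mainTheorem6 (T : Type) (A : graph_of_groups T) (B : Agraph A)
  (u0 : vert (bgraph B)) (b0 : T) (s : list (edge (bgraph B) * T)) :
  folded B ->
  B_reduced B u0 b0 s ->
  A_reduced A (labv B u0) (mu_head B u0 b0 s) (mu_rest B s).
Proof.
  intros Hf [[Hb0 Hp] Hn]. split; [split|].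
  - destruct s as [|[f b] s']; simpl.
    + destruct (bvgrp_sub u0) as [H _]. apply H; auto.
    + destruct Hp as [Ho _]. apply gmem_mul.
      * destruct (bvgrp_sub u0) as [H _]. apply H; auto.
      * unfold Agrp. rewrite <- Ho. apply falpha_mem.
  - apply path_mu; auto.
  - eapply nobt_mu; eauto.
Qed.
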